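(* Consider AdaHedge for $K$-armed bandits relying on a known upper bound $M$ on the payoffs (described in the context). For all $m\in\mathbb{R}$ with $m\le M$, all oblivious sequences $y_1,y_2,\dots$ in $[m,M]^K$ and all $T\ge1$, \[ R_T(y_{1:T})\le 2(M-m)\sqrt{KT\ln K}+2(M-m). \]
   Context: Oblivious adversarial $K$-armed bandits ($K\ge2$): reward vectors $y_t\in[m,M]^K$ fixed beforehand; at round $t$ the player draws $A_t\sim p_t$ and observes only $y_{t,A_t}$; $R_T(y_{1:T})=\max_a\sum_{t=1}^Ty_{t,a}-\mathbb{E}[\sum_{t=1}^Ty_{t,A_t}]$. The player knows $M$ but not $m$. Algorithm (input $M$): $\eta_1=+\infty$, $p_1=(1/K,\dots,1/K)$. For $t\ge1$: draw $A_t\sim p_t$; observe $y_{t,A_t}$; set $\widehat y_{t,a}=\frac{y_{t,a}-M}{p_{t,a}}\mathbf{1}\{A_t=a\}+M$ for all $a$; compute $\delta_t=-\sum_a p_{t,a}\widehat y_{t,a}+\frac1{\eta_t}\ln(\sum_a p_{t,a}e^{\eta_t\widehat y_{t,a}})$ if $\eta_t<\infty$ and $\delta_t=-\sum_a p_{t,a}\widehat y_{t,a}+\max_a\widehat y_{t,a}$ if $\eta_t=\infty$; set $\eta_{t+1}=\ln K/\sum_{s=1}^t\delta_s$; set $p_{t+1,a}=\exp(\eta_{t+1}\sum_{s=1}^t\widehat y_{s,a})/\sum_{k=1}^K\exp(\eta_{t+1}\sum_{s=1}^t\widehat y_{s,k})$. No mixing with the uniform distribution is used. *)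

(* Defs.v *)
From HB Require Import structures.
From mathcomp Require Import all_boot all_order all_algebra.
From mathcomp Require Import all_classical all_reals all_analysis.
Set Implicit Arguments. Unset Strict Implicit. Unset Printing Implicit Defensive.
Import Order.TTheory GRing.Theory Num.Theory.
Local Open Scope ring_scope.

Section AdaHedgeBandit.
Variables (R : realType) (K : nat).

(* State of the algorithm before a round: cumulative estimated rewards
   Lhat a = sum_{s<t} yhat_{s,a}, and cumulative mixability gaps
   D = sum_{s<t} delta_s.  The learning rate is eta_t = ln K / D,
   with the convention eta = +infty when D = 0 (in particular eta_1 = +infty). *)
Definition state := (('I_K -> R) * R)%type.

Definition init_state : state := (fun _ => 0, 0).

Definition expw (eta : R) (L : 'I_K -> R) (a : 'I_K) : R :=
  expR (eta * L a) / \sum_(k < K) expR (eta * L k).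

(* Limit eta -> +infty of exponential weights: uniform on the argmax set. *)
Definition argmax_set (L : 'I_K -> R) : {set 'I_K} :=
  [set a | [forall b, L b <= L a]].
Definition unif_argmax (L : 'I_K -> R) (a : 'I_K) : R :=
  (a \in argmax_set L)%:R / #|argmax_set L|%:R.

Definition eta_of (D : R) : R := ln K%:R / D.

Definition prob (st : state) : 'I_K -> R :=
  if st.2 == 0 then unif_argmax st.1 else expw (eta_of st.2) st.1.

Definition yhat (M : R) (p : 'I_K -> R) (yt : 'I_K -> R) (a b : 'I_K) : R :=
  (yt b - M) / p b * (a == b)%:R + M.

Definition delta (D : R) (p : 'I_K -> R) (yh : 'I_K -> R) (a : 'I_K) : R :=
  if D == 0 then
    - (\sum_(b < K) p b * yh b) + \big[Num.max/yh a]_(b < K) yh b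
  else
    - (\sum_(b < K) p b * yh b)
    + (eta_of D)^-1 * ln (\sum_(b < K) p b * expR (eta_of D * yh b)).

Definition step (M : R) (yt : 'I_K -> R) (st : state) (a : 'I_K) : state :=
  let p := prob st in
  let yh := yhat M p yt a in
  (fun b => st.1 b + yh b, st.2 + delta st.2 p yh a).

(* Expected cumulative reward of the algorithm over n rounds starting at
   (0-based) round t from state st, for the oblivious sequence y. *)
Fixpoint exp_reward (M : R) (y : nat -> 'I_K -> R) (n t : nat) (st : state)
  : R :=
  match n with
  | 0 => 0
  | n'.+1 => \sum_(a < K) prob st a *
               (y t a + exp_reward M y n' t.+1 (step M (y t) st a))
  end.

(* Regret R_T(y_{1:T}) = max_a sum_{t<T} y_t,a - E[sum_{t<T} y_{t,A_t}]
   (round t+1 of the paper is index t here). *)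
(* Maximum of a (nonempty, since K >= 2) list of reals. *)
Definition maxlist (s : seq R) : R := \big[Num.max/head 0 s]_(x <- s) x.

Definition regret (M : R) (y : nat -> 'I_K -> R) (T : nat) : R :=
  maxlist [seq \sum_(t < T) y t a | a <- enum 'I_K]
  - exp_reward M y T 0 init_state.

End AdaHedgeBandit.

(* Main.v *)
Require Import Defs.
From HB Require Import structures.
From mathcomp Require Import all_boot all_order all_algebra.
From mathcomp Require Import all_classical all_reals all_analysis.
From mathcomp Require Import ring lra.
Import Order.TTheory GRing.Theory Num.Theory.
Import numFieldNormedType.Exports.
Local Open Scope classical_set_scope.
Local Open Scope ring_scope.
Set Implicit Arguments. Unset Strict Implicit. Unset Printing Implicit Defensive.

Lemma expR_ge_cubic (R : realType) (x : R) : 0 <= x ->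
  1 + x + x ^+ 2 / 2 + x ^+ 3 / 6 <= expR x.
Proof.
move=> x_ge0; rewrite /expR.
pose f (i : nat) := exp_coeff x i * (i < 4)%:R.
have F m : (3 < m)%N -> \sum_(0 <= i < m) f i = 1 + x + x ^+ 2 / 2 + x ^+ 3 / 6.
  move=> m3.
  rewrite (@big_cat_nat _ _ _ 4)//= [X in _ + X]big1_seq ?addr0; last first.
    by move=> i /andP[_]; rewrite mem_index_iota => /andP[i4 _]; rewrite /f ltnNge i4 mulr0.
  rewrite !big_nat_recr//= big_nil /f /= !mulr1 add0r !exp_coeffE /=.
  rewrite !factS fact0 /= expr0 expr1; congr (_ + _ + _ + _).
  - by rewrite invr1 mulr1.
  - by rewrite invr1 mul1r.
  - by rewrite mulrC.
  - by rewrite mulrC.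
rewrite [leLHS](_ : _ = limn (series f)); last first.
  by apply/esym/(@lim_near_cst R^o) => //; near=> k; apply: F; near: k.
apply: ler_lim; first by apply: is_cvg_near_cst; near=> k; apply: F; near: k.
  exact: is_cvg_series_exp_coeff.
near=> k; apply: ler_sum => i _; rewrite /f.
case: (i < 4)%N; first by rewrite mulr1.
by rewrite mulr0 exp_coeffE /= mulr_ge0 ?invr_ge0 ?exprn_ge0.
Unshelve. all: by end_near. Qed.

Lemma expR_le_quad (R : realType) (x : R) : x <= 0 ->
  expR x <= 1 + x + x ^+ 2 / 2.
Proof.
move=> x0; set y := - x.
have y0 : 0 <= y by rewrite /y oppr_ge0.
have hc := @expR_ge_cubic R y y0.
have hxy : expR x * expR y = 1 by rewrite -expRD /y subrr expR0.
have ex0 := expR_gt0 x.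
have hA : 0 <= 1 + x + x ^+ 2 / 2.
  have -> : 1 + x + x ^+ 2 / 2 = ((x + 1) ^+ 2 + 1) / 2 by field.
  by rewrite divr_ge0 // addr_ge0 // sqr_ge0.
have hprod : 1 <= (1 + x + x ^+ 2 / 2) * (1 + y + y ^+ 2 / 2 + y ^+ 3 / 6).
  have -> : (1 + x + x ^+ 2 / 2) * (1 + y + y ^+ 2 / 2 + y ^+ 3 / 6)
     = 1 + y ^+ 3 / 6 + y ^+ 4 / 12 + y ^+ 5 / 12.
    by rewrite /y; field.
  rewrite -addrA -addrA lerDl addr_ge0 ?divr_ge0 ?exprn_ge0 //.
  by rewrite addr_ge0 ?divr_ge0 ?exprn_ge0.
have h2 : expR x * (1 + y + y ^+ 2 / 2 + y ^+ 3 / 6) <= 1.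
  by rewrite -[leRHS]hxy; apply: ler_wpM2l => //; exact: ltW.
have : expR x <= expR x * ((1 + x + x ^+ 2 / 2) * (1 + y + y ^+ 2 / 2 + y ^+ 3 / 6)).
  by rewrite ler_peMr // ltW.
move=> h3; apply: (le_trans h3).
rewrite mulrCA -[leRHS]mulr1; exact: ler_wpM2l.
Qed.

Lemma ln_le_sub1 (R : realType) (w : R) : 0 < w -> ln w <= w - 1.
Proof.
move=> w0; have := @le_ln1Dx R (w - 1).
rewrite [1 + _]addrC subrK; apply; lra.
Qed.

Section Basic.
Variables (R : realType) (K : nat) (HK : (1 < K)%N).

Lemma K_gt0 : 0 < K%:R :> R.
Proof. by rewrite ltr0n (ltnW HK). Qed.

Lemma lnK_gt0 : 0 < ln (K%:R : R).
Proof. by apply: ln_gt0; rewrite ltr1n. Qed.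

Let a0 : 'I_K := Ordinal (ltnW HK).

Lemma sum_gt0 (F : 'I_K -> R) : (forall b, 0 < F b) -> 0 < \sum_b F b.
Proof.
move=> Fp; apply: (lt_le_trans (Fp a0)); rewrite (bigD1 a0) //= lerDl.
by apply: sumr_ge0 => i _; exact: ltW.
Qed.

Lemma sum_ge_term (F : 'I_K -> R) c : (forall b, 0 <= F b) -> F c <= \sum_b F b.
Proof.
by move=> Fp; rewrite (bigD1 c) //= lerDl; apply: sumr_ge0 => i _.
Qed.

Lemma sum_delta (F : 'I_K -> R) a : \sum_b F b * (a == b)%:R = F a.
Proof.
rewrite (bigD1 a) //= eqxx mulr1 big1 ?addr0 // => b.
by rewrite eq_sym => /negbTE ->; rewrite mulr0.
Qed.

Lemma sum_delta' (F : 'I_K -> R) c : \sum_b F b * (b == c)%:R = F c.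
Proof.
rewrite (bigD1 c) //= eqxx mulr1 big1 ?addr0 // => b.
by move=> /negbTE ->; rewrite mulr0.
Qed.

Lemma expw_gt0 (eta : R) (L : 'I_K -> R) a : 0 < expw eta L a.
Proof. by rewrite /expw divr_gt0 ?expR_gt0 // sum_gt0 // => b; exact: expR_gt0. Qed.

Lemma expw_sum (eta : R) (L : 'I_K -> R) : \sum_a expw eta L a = 1.
Proof.
rewrite /expw -mulr_suml mulfV // gt_eqF // sum_gt0 // => b; exact: expR_gt0.
Qed.

Lemma argmax_nonempty (L : 'I_K -> R) : (0 < #|argmax_set L|)%N.
Proof.
have [i hi] : exists i, \big[Num.max/L a0]_b L b = L i.
  apply: (big_ind (fun x => exists i, x = L i)); first by exists a0.
    move=> x1 x2 [i1 ->] [i2 ->].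
    by case: (leP (L i1) (L i2)) => _; [exists i2 | exists i1].
  by move=> i _; exists i.
apply/card_gt0P; exists i; rewrite inE; apply/forallP => b.
by rewrite -hi; exact: le_bigmax.
Qed.

Lemma unif_ge0 (L : 'I_K -> R) a : 0 <= unif_argmax L a.
Proof. by rewrite /unif_argmax divr_ge0. Qed.

Lemma unif_sum (L : 'I_K -> R) : \sum_a unif_argmax L a = 1.
Proof.
rewrite /unif_argmax -mulr_suml.
have -> : \sum_a (a \in argmax_set L)%:R = \sum_(a in argmax_set L) (1 : R).
  by rewrite [RHS]big_mkcond /=; apply: eq_bigr => a _; case: (a \in _).
by rewrite sumr_const mulfV // pnatr_eq0 -lt0n argmax_nonempty.
Qed.

Lemma prob_ge0 (st : state R K) a : 0 <= prob st a.
Proof. rewrite /prob; case: (st.2 == 0); [exact: unif_ge0 | exact: ltW (expw_gt0 _ _ _)]. Qed.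

Lemma prob_sum (st : state R K) : \sum_a prob st a = 1.
Proof. rewrite /prob; case: (st.2 == 0); [exact: unif_sum | exact: expw_sum]. Qed.

Definition Phi (eta : R) (L : 'I_K -> R) :=
  eta^-1 * ln ((\sum_b expR (eta * L b)) / K%:R).

Lemma sumexp_pos (z : 'I_K -> R) : 0 < (\sum_b expR (z b)) / K%:R.
Proof. by rewrite divr_gt0 ?K_gt0 // sum_gt0 // => b; exact: expR_gt0. Qed.

Lemma gibbs (q z : 'I_K -> R) : (forall b, 0 < q b) -> \sum_b q b = 1 ->
  \sum_b q b * (z b - ln (K%:R * q b)) <= ln ((\sum_b expR (z b)) / K%:R).
Proof.
move=> qp q1; set S := (\sum_b expR (z b)) / K%:R.
have S0 : 0 < S by exact: sumexp_pos.
have hb b : q b * (z b - ln (K%:R * q b)) <=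
            q b * ln S + (expR (z b) / K%:R / S - q b).
  set w := expR (z b) / (K%:R * q b * S).
  have Kq : 0 < K%:R * q b by rewrite mulr_gt0 ?K_gt0.
  have w0 : 0 < w by rewrite /w divr_gt0 ?expR_gt0 // mulr_gt0.
  have lw : ln w = z b - ln (K%:R * q b) - ln S.
    rewrite /w ln_div; last 2 first.
    - by rewrite posrE expR_gt0.
    - by rewrite posrE mulr_gt0.
    rewrite lnM; last 2 first.
    - by rewrite posrE.
    - by rewrite posrE.
    by rewrite expRK opprD addrA.
  have := @ln_le_sub1 R w w0; rewrite lw => h.
  have qb := qp b.
  have e : q b * (w - 1) = expR (z b) / K%:R / S - q b.
    rewrite /w; field; rewrite !gt_eqF ?K_gt0 //.
  rewrite -e -mulrDr; apply: ler_wpM2l; first exact: ltW.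
  by move: h; lra.
apply: (@le_trans _ _ (\sum_b (q b * ln S + (expR (z b) / K%:R / S - q b)))).
  by apply: ler_sum => b _; exact: hb.
rewrite big_split /= -mulr_suml q1 mul1r sumrB -!mulr_suml q1.
by rewrite -/S mulfV ?gt_eqF // subrr addr0.
Qed.

Lemma ePhi (eta : R) (L : 'I_K -> R) : 0 < eta -> eta * Phi eta L = ln ((\sum_b expR (eta * L b)) / K%:R).
Proof. by move=> e0; rewrite /Phi mulrA mulfV ?gt_eqF // mul1r. Qed.

Lemma Phi_mono (e1 e2 : R) (L : 'I_K -> R) : 0 < e1 -> e1 <= e2 -> Phi e1 L <= Phi e2 L.
Proof.
move=> e10 e12; have e20 : 0 < e2 by exact: lt_le_trans e12.
set q := expw e1 L.
have qp : forall b, 0 < q b by move=> b; exact: expw_gt0.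
have q1 : \sum_b q b = 1 by exact: expw_sum.
set Z := \sum_k expR (e1 * L k).
have Z0 : 0 < Z by apply: sum_gt0 => b; exact: expR_gt0.
set Q := \sum_b q b * L b.
set G0 := \sum_b q b * ln (K%:R * q b).
have lnq b : ln (K%:R * q b) = ln K%:R + e1 * L b - ln Z.
  rewrite /q /expw lnM ?posrE ?K_gt0 ?divr_gt0 ?expR_gt0 //.
  by rewrite ln_div ?posrE ?expR_gt0 // expRK addrA.
have hG0 : G0 = e1 * Q - e1 * Phi e1 L.
  rewrite ePhi // -/Z ln_div ?posrE ?K_gt0 //.
  rewrite /G0 (eq_bigr (fun b => q b * (ln K%:R - ln Z) + e1 * (q b * L b))); last first.
    by move=> b _; rewrite lnq; ring.
  by rewrite big_split /= -mulr_suml q1 mul1r -mulr_sumr -/Q; ring.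
have G0ge : 0 <= G0.
  have := @gibbs q (fun _ => 0) qp q1.
  rewrite (eq_bigr (fun b => - (q b * ln (K%:R * q b)))); last first.
    by move=> b _; rewrite sub0r mulrN.
  rewrite sumrN -/G0 (eq_bigr (fun _ => 1)); last by move=> b _; rewrite expR0.
  by rewrite sumr_const card_ord mulfV ?gt_eqF ?K_gt0 // ln1 oppr_le0.
have h2 := @gibbs q (fun b => e2 * L b) qp q1.
rewrite -ePhi // in h2.
have e : \sum_b q b * (e2 * L b - ln (K%:R * q b)) = e2 * Q - G0.
  rewrite /G0 /Q mulr_sumr -sumrB; apply: eq_bigr => b _; ring.
rewrite e in h2.
have hPhi1 : Phi e1 L = Q - G0 / e1.
  by rewrite hG0; field; rewrite gt_eqF.
have hPhi2 : Q - G0 / e2 <= Phi e2 L.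
  rewrite -(ler_pM2l e20) mulrBr; apply: le_trans h2.
  by rewrite mulrCA mulfV ?gt_eqF // mulr1.
rewrite hPhi1; apply: le_trans hPhi2; rewrite lerD2l lerN2.
apply: ler_wpM2l => //; rewrite lef_pV2 ?posrE //.
Qed.

End Basic.

Section Round.
Variables (R : realType) (K : nat) (HK : (1 < K)%N) (M lo : R).
Let a0 : 'I_K := Ordinal (ltnW HK).

Definition maxL (L : 'I_K -> R) := \big[Num.max/L a0]_b L b.
Definition Psi (st : state R K) :=
  if st.2 == 0 then maxL st.1 else Phi (eta_of K st.2) st.1.

Lemma maxL_ge (L : 'I_K -> R) c : L c <= maxL L.
Proof. exact: le_bigmax. Qed.

Lemma maxL_le (L : 'I_K -> R) x : (forall c, L c <= x) -> maxL L <= x.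
Proof. by move=> h; apply: bigmax_le => // i _. Qed.

Lemma eta_gt0 (D : R) : 0 < D -> 0 < eta_of K D.
Proof. by move=> D0; rewrite /eta_of divr_gt0 // lnK_gt0. Qed.

Lemma eta_inv (D : R) : 0 < D -> ln (K%:R : R) / eta_of K D = D.
Proof.
move=> D0; rewrite /eta_of invf_div mulrA mulrC mulrA mulVf ?mul1r //.
by rewrite gt_eqF // lnK_gt0.
Qed.

Section WithY.
Variables (st : state R K) (yt : 'I_K -> R) (a : 'I_K).
Hypothesis Hyt : forall b, lo <= yt b <= M.
Hypothesis HD : 0 <= st.2.

Local Notation p := (prob st).
Local Notation yh := (yhat M (prob st) yt a).

Lemma yh_le b : yh b <= M.
Proof.
rewrite /yhat; have : (yt b - M) / p b * (a == b)%:R <= 0.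
  apply: mulr_le0_ge0 => //; apply: mulr_le0_ge0; last by rewrite invr_ge0 prob_ge0.
  by rewrite subr_le0; case/andP: (Hyt b).
by move=> h; lra.
Qed.

Lemma sum_p_yh : p a != 0 -> \sum_b p b * yh b = yt a.
Proof.
move=> pa; rewrite /yhat.
rewrite (eq_bigr (fun b => (p b * ((yt b - M) / p b)) * (a == b)%:R + p b * M)); last first.
  by move=> b _; ring.
rewrite big_split /= sum_delta -mulr_suml prob_sum // mul1r.
by rewrite mulrCA mulfV // mulr1 subrK.
Qed.

Lemma mix_ge (eta : R) : expR (eta * \sum_b p b * yh b) <= \sum_b p b * expR (eta * yh b).
Proof.
set c := \sum_b p b * yh b.
have h b : p b * (expR (eta * c) * (1 + (eta * yh b - eta * c))) <= p b * expR (eta * yh b).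
  apply: ler_wpM2l; first exact: prob_ge0.
  have -> : expR (eta * yh b) = expR (eta * c) * expR (eta * yh b - eta * c).
    by rewrite -expRD addrC subrK.
  by apply: ler_wpM2l; [exact: expR_ge0 | exact: expR_ge1Dx].
apply: le_trans; last by apply: ler_sum => b _; exact: h.
rewrite (eq_bigr (fun b => expR (eta * c) * p b + (expR (eta * c) * eta) * (p b * yh b)
    - (expR (eta * c) * eta * c) * p b)); last by move=> b _; ring.
rewrite sumrB big_split /= -!mulr_sumr prob_sum // -/c.
by rewrite !mulr1 addrK.
Qed.

Lemma mix_gt0 (eta : R) : 0 < \sum_b p b * expR (eta * yh b).
Proof. exact: lt_le_trans (expR_gt0 _) (mix_ge eta). Qed.

Lemma delta_ge0 : 0 <= delta st.2 p yh a.
Proof.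
rewrite /delta; case: eqP => D0.
  rewrite addrC subr_ge0.
  apply: (@le_trans _ _ (\sum_b p b * \big[Num.max/yh a]_b yh b)).
    by apply: ler_sum => b _; apply: ler_wpM2l; [exact: prob_ge0 | exact: le_bigmax].
  by rewrite -mulr_suml prob_sum // mul1r.
have Dp : 0 < st.2 by rewrite lt_neqAle eq_sym; apply/andP; split => //; exact/eqP.
have e0 := eta_gt0 Dp.
rewrite addrC subr_ge0 -(ler_pM2l e0) mulrA mulfV ?gt_eqF // mul1r.
rewrite -ler_expR lnK ?posrE ?mix_gt0 //; exact: mix_ge.
Qed.

Lemma delta_leM : p a != 0 -> delta st.2 p yh a <= M - yt a.
Proof.
move=> pa; rewrite /delta sum_p_yh //; case: eqP => D0.
  rewrite addrC lerD2r; apply: bigmax_le => [|b _]; exact: yh_le.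
have Dp : 0 < st.2 by rewrite lt_neqAle eq_sym; apply/andP; split => //; exact/eqP.
have e0 := eta_gt0 Dp.
rewrite addrC lerD2r -(ler_pM2l e0) mulrA mulfV ?gt_eqF // mul1r.
rewrite -ler_expR lnK ?posrE ?mix_gt0 //.
apply: (@le_trans _ _ (\sum_b p b * expR (eta_of K st.2 * M))).
  apply: ler_sum => b _; apply: ler_wpM2l; first exact: prob_ge0.
  by rewrite ler_expR ler_pM2l // yh_le.
by rewrite -mulr_suml prob_sum // mul1r.
Qed.

Lemma delta_le_var : st.2 != 0 ->
  delta st.2 p yh a <= eta_of K st.2 / 2 * \sum_b p b * (yh b - M) ^+ 2.
Proof.
move=> D0; rewrite /delta (negbTE D0).
have Dp : 0 < st.2 by rewrite lt_neqAle eq_sym D0.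
set eta := eta_of K st.2.
have e0 : 0 < eta := eta_gt0 Dp.
set c := \sum_b p b * yh b.
set V := \sum_b p b * (yh b - M) ^+ 2.
set u := eta * (c - M) + eta ^+ 2 / 2 * V.
have hS : \sum_b p b * expR (eta * yh b) <= expR (eta * M) * (1 + u).
  have h b : p b * expR (eta * yh b) <= expR (eta * M) *
      (p b + p b * (eta * (yh b - M)) + p b * (eta * (yh b - M)) ^+ 2 / 2).
    have -> : expR (eta * yh b) = expR (eta * M) * expR (eta * (yh b - M)).
      by rewrite -expRD; congr expR; ring.
    rewrite mulrCA; apply: ler_wpM2l; first exact: expR_ge0.
    have -> : p b + p b * (eta * (yh b - M)) + p b * (eta * (yh b - M)) ^+ 2 / 2
      = p b * (1 + eta * (yh b - M) + (eta * (yh b - M)) ^+ 2 / 2) by ring.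
    apply: ler_wpM2l; first exact: prob_ge0.
    apply: expR_le_quad; apply: mulr_ge0_le0; first exact: ltW.
    by rewrite subr_le0 yh_le.
  apply: le_trans; first by apply: ler_sum => b _; exact: h.
  rewrite -mulr_sumr; apply: ler_wpM2l; first exact: expR_ge0.
  rewrite !big_split /= prob_sum //.
  rewrite /u /c /V le_eqVlt; apply/orP; left; apply/eqP.
  rewrite (eq_bigr (fun b => eta * (p b * yh b) - eta * M * p b)); last by move=> b _; ring.
  rewrite sumrB -!mulr_sumr prob_sum // mulr1.
  have -> : \sum_i p i * (eta * (yh i - M)) ^+ 2 / 2 =
      eta ^+ 2 / 2 * \sum_b p b * (yh b - M) ^+ 2.
    by rewrite mulr_sumr; apply: eq_bigr => b _; ring.
  ring.
have u1 : 0 < 1 + u.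
  have := lt_le_trans (mix_gt0 eta) hS.
  by rewrite pmulr_rgt0 // expR_gt0.
have hl : ln (\sum_b p b * expR (eta * yh b)) <= eta * M + u.
  apply: (@le_trans _ _ (ln (expR (eta * M) * (1 + u)))).
    by rewrite ler_ln ?posrE ?mix_gt0 ?mulr_gt0 ?expR_gt0.
  rewrite lnM ?posrE ?expR_gt0 // expRK lerD2l.
  by have := @ln_le_sub1 R (1 + u) u1; rewrite [1 + u]addrC addrK.
have : eta^-1 * ln (\sum_b p b * expR (eta * yh b)) <= eta^-1 * (eta * M + u).
  by apply: ler_wpM2l => //; rewrite invr_ge0 ltW.
have -> : eta^-1 * (eta * M + u) = c + eta / 2 * V.
  by rewrite /u; field; rewrite gt_eqF.
by move=> h; rewrite -/c; lra.
Qed.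

End WithY.

End Round.

Section Round2.
Variables (R : realType) (K : nat) (HK : (1 < K)%N) (M lo : R).

Lemma Dpos (D : R) : 0 <= D -> D != 0 -> 0 < D.
Proof. by move=> h1 h2; rewrite lt_neqAle eq_sym h2. Qed.

Lemma etaD (D : R) : 0 < D -> eta_of K D * D = ln K%:R.
Proof. by move=> D0; rewrite /eta_of mulfVK // gt_eqF. Qed.

Lemma Psi_ge (st : state R K) c : 0 <= st.2 -> st.1 c - st.2 <= Psi HK st.
Proof.
move=> HD; rewrite /Psi; case: eqP => D0.
  by rewrite D0 subr0; exact: maxL_ge.
have Dp := Dpos HD (introN eqP D0).
have e0 := eta_gt0 HK Dp.
rewrite -(ler_pM2l e0) ePhi // mulrBr etaD //.
have -> : eta_of K st.2 * st.1 c - ln K%:R = ln (expR (eta_of K st.2 * st.1 c) / K%:R).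
  by rewrite ln_div ?posrE ?expR_gt0 ?K_gt0 // expRK.
rewrite ler_ln ?posrE ?divr_gt0 ?expR_gt0 ?K_gt0 ?sumexp_pos //.
rewrite ler_pM2r ?invr_gt0 ?K_gt0 //.
  by apply: sum_ge_term => b; exact: expR_ge0.
by apply: (sum_gt0 HK) => b; exact: expR_gt0.
Qed.

Lemma Psi_le_max (st : state R K) : 0 <= st.2 -> Psi HK st <= maxL HK st.1.
Proof.
move=> HD; rewrite /Psi; case: eqP => D0 //.
have Dp := Dpos HD (introN eqP D0).
have e0 := eta_gt0 HK Dp.
rewrite -(ler_pM2l e0) ePhi // -[X in _ <= X]expRK.
rewrite ler_ln ?posrE ?expR_gt0 ?sumexp_pos //.
rewrite ler_pdivrMr ?K_gt0 //.
apply: (@le_trans _ _ (\sum_(b < K) expR (eta_of K st.2 * maxL HK st.1))).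
  apply: ler_sum => b _; rewrite ler_expR ler_pM2l //; exact: maxL_ge.
by rewrite sumr_const card_ord mulr_natr.
Qed.

Section WithY.
Variables (st : state R K) (yt : 'I_K -> R) (a : 'I_K).
Hypothesis Hyt : forall b, lo <= yt b <= M.
Hypothesis HD : 0 <= st.2.

Local Notation p := (prob st).
Local Notation yh := (yhat M (prob st) yt a).

Lemma Psi_step : Psi HK (step M yt st a) <=
  Psi HK st + (delta st.2 p yh a + \sum_b p b * yh b).
Proof.
have dg := delta_ge0 HK M yt a HD.
have HD' : 0 <= (step M yt st a).2 by rewrite /= addr_ge0.
case: (eqVneq st.2 0) => D0.
  apply: (le_trans (Psi_le_max HD')).
  have -> : delta st.2 p yh a + \sum_b p b * yh b = \big[Num.max/yh a]_b yh b.
    by rewrite /delta D0 eqxx; ring.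
  rewrite /Psi D0 eqxx.
  apply: maxL_le => c /=; apply: lerD; first exact: maxL_ge.
  exact: le_bigmax.
have Dp := Dpos HD D0.
set eta := eta_of K st.2.
have e0 : 0 < eta := eta_gt0 HK Dp.
set D' := (step M yt st a).2.
have D'p : 0 < D' by rewrite /D' /= ltr_wpDr.
have e0' : 0 < eta_of K D' := eta_gt0 HK D'p.
set L' := (step M yt st a).1.
set Z := \sum_k expR (eta * st.1 k).
have Z0 : 0 < Z by apply: (sum_gt0 HK) => b; exact: expR_gt0.
have pb b : p b = expR (eta * st.1 b) / Z by rewrite /prob (negbTE D0).
set S' := \sum_b p b * expR (eta * yh b).
have S0 : 0 < S' by exact: mix_gt0.
have -> : delta st.2 p yh a + \sum_b p b * yh b = eta^-1 * ln S'.
  by rewrite /delta (negbTE D0) -/eta -/S'; ring.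
have hPsi : Psi HK (step M yt st a) = Phi (eta_of K D') L'.
  by rewrite /Psi -/D' (negbTE (lt0r_neq0 D'p)).
have hPsi0 : Psi HK st = Phi eta st.1 by rewrite /Psi (negbTE D0).
rewrite hPsi hPsi0.
apply: (@le_trans _ _ (Phi eta L')).
  apply: Phi_mono => //.
  rewrite /eta /eta_of; apply: ler_wpM2l; first exact/ltW/lnK_gt0.
  rewrite lef_pV2 ?posrE //.
  by rewrite /D' /= lerDl.
have hsum : \sum_b expR (eta * L' b) = Z * S'.
  rewrite /S' mulr_sumr; apply: eq_bigr => b _.
  rewrite pb /L' /= mulrDr expRD; field; exact: lt0r_neq0.
rewrite /Phi hsum -/Z -mulrDr; apply: ler_wpM2l; first by rewrite invr_ge0 ltW.
have ZK : 0 < Z / K%:R by rewrite divr_gt0 // (K_gt0 _ HK).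
by rewrite mulrAC (@lnM _ (Z / K%:R) S') ?posrE.
Qed.

Lemma var_term : \sum_a' p a' * (\sum_b p b * (yhat M p yt a' b - M) ^+ 2)
  <= K%:R * (M - lo) ^+ 2.
Proof.
apply: (@le_trans _ _ (\sum_(a' < K) (M - lo) ^+ 2)); last first.
  by rewrite sumr_const card_ord mulr_natl.
apply: ler_sum => a' _.
rewrite /yhat.
rewrite (eq_bigr (fun b => (p b * ((yt b - M) / p b) ^+ 2) * (a' == b)%:R)); last first.
  by move=> b _; rewrite addrK; case: (a' == b); rewrite ?mulr1 ?mulr0 //; ring.
rewrite sum_delta.
have [ya1 ya2] := andP (Hyt a').
case: (eqVneq (p a') 0) => pa.
  by rewrite pa !mul0r sqr_ge0.
have -> : p a' * (p a' * ((yt a' - M) / p a') ^+ 2) = (yt a' - M) ^+ 2.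
  by field.
nra.
Qed.

End WithY.

Lemma sum_a_p_yh (st : state R K) (yt : 'I_K -> R) c : yt c <= M ->
  yt c <= \sum_a prob st a * yhat M (prob st) yt a c.
Proof.
move=> hc; rewrite /yhat.
rewrite (eq_bigr (fun a => (prob st a * ((yt c - M) / prob st c)) * (a == c)%:R
    + prob st a * M)); last by move=> b _; ring.
rewrite big_split /= sum_delta' -mulr_suml prob_sum // mul1r.
case: (eqVneq (prob st c) 0) => pc.
  by rewrite pc mul0r add0r.
by rewrite mulrCA mulfV // mulr1 subrK.
Qed.

End Round2.

Section Expect.
Variables (R : realType) (K : nat) (HK : (1 < K)%N) (M lo : R).
Variable (y : nat -> 'I_K -> R).
Hypothesis Hy : forall t b, lo <= y t b <= M.

Fixpoint Ex (n t : nat) (st : state R K) (g : state R K -> R) : R :=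
  if n is n'.+1 then \sum_a prob st a * Ex n' t.+1 (step M (y t) st a) g
  else g st.

Lemma step_D_ge0 t (st : state R K) a : 0 <= st.2 -> 0 <= (step M (y t) st a).2.
Proof. by move=> HD; rewrite /= addr_ge0 // delta_ge0. Qed.

Lemma Ex_le n t st g1 g2 : (forall s, 0 <= s.2 -> g1 s <= g2 s) -> 0 <= st.2 ->
  Ex n t st g1 <= Ex n t st g2.
Proof.
move=> h; elim: n t st => [|n IH] t st HD /=; first exact: h.
apply: ler_sum => a _; apply: ler_wpM2l; first exact: prob_ge0.
by apply: IH; exact: step_D_ge0.
Qed.

Lemma Ex_const n t st c : Ex n t st (fun _ => c) = c.
Proof.
elim: n t st => [|n IH] t st //=.
rewrite (eq_bigr (fun a => prob st a * c)); last by move=> a _; rewrite IH.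
by rewrite -mulr_suml prob_sum // mul1r.
Qed.

Lemma Ex_lin n t st (al : R) g1 g2 :
  Ex n t st (fun s => al * g1 s + g2 s) = al * Ex n t st g1 + Ex n t st g2.
Proof.
elim: n t st => [|n IH] t st //=.
rewrite (eq_bigr (fun a => al * (prob st a * Ex n t.+1 (step M (y t) st a) g1)
   + prob st a * Ex n t.+1 (step M (y t) st a) g2)); last first.
  by move=> a _; rewrite IH; ring.
by rewrite big_split /= -mulr_sumr.
Qed.

Definition G (s : state R K) := Psi HK s - s.2.

Lemma claimA n t st : 0 <= st.2 ->
  Ex n t st G - G st <= exp_reward M y n t st.
Proof.
elim: n t st => [|n IH] t st HD /=; first by rewrite subrr.
rewrite -[G st]mul1r -(prob_sum HK st) mulr_suml -sumrB.
apply: ler_sum => a _.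
case: (eqVneq (prob st a) 0) => pa; first by rewrite pa !mul0r subrr.
rewrite -mulrBr; apply: ler_wpM2l; first exact: prob_ge0.
have h1 := IH t.+1 (step M (y t) st a) (step_D_ge0 t a HD).
have h2 := Psi_step HK M (y t) a HD.
rewrite sum_p_yh // in h2.
move: h1; rewrite /G /=; move: h2 => /=; lra.
Qed.

Lemma claimB n t st c : st.1 c + \sum_(i < n) y (t + i)%N c <= Ex n t st (fun s => s.1 c).
Proof.
elim: n t st => [|n IH] t st /=; first by rewrite big_ord0 addr0.
apply: (@le_trans _ _ (\sum_a prob st a *
    ((step M (y t) st a).1 c + \sum_(i < n) y (t.+1 + i)%N c))); last first.
  by apply: ler_sum => a _; apply: ler_wpM2l; [exact: prob_ge0 | exact: IH].
rewrite big_ord_recl addn0.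
rewrite (eq_bigr (fun a => prob st a * yhat M (prob st) (y t) a c
   + prob st a * (st.1 c + \sum_(i < n) y (t.+1 + i)%N c))); last first.
  by move=> a _ /=; ring.
rewrite big_split /= -mulr_suml prob_sum // mul1r.
have -> : \sum_(i < n) y (t + bump 0 i)%N c = \sum_(i < n) y (t.+1 + i)%N c.
  by apply: eq_bigr => i _; rewrite addSnnS.
have := sum_a_p_yh HK st (proj2 (andP (Hy t c))).
lra.
Qed.

Definition phi (s : state R K) := (s.2 - (M - lo) / 2) ^+ 2.

Lemma claimC n t st : 0 <= st.2 ->
  Ex n t st phi <= phi st + n%:R * (ln K%:R * (K%:R * (M - lo) ^+ 2)).
Proof.
have lK := lnK_gt0 R HK.
elim: n t st => [|n IH] t st HD /=; first by rewrite mul0r addr0.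
set C := ln K%:R * (K%:R * (M - lo) ^+ 2).
apply: (@le_trans _ _ (\sum_a prob st a * (phi (step M (y t) st a) + n%:R * C))).
  by apply: ler_sum => a _; apply: ler_wpM2l; [exact: prob_ge0 | apply: IH; exact: step_D_ge0].
rewrite (eq_bigr (fun a => prob st a * phi (step M (y t) st a) + n%:R * C * prob st a)); last first.
  by move=> a _; ring.
rewrite big_split /= -mulr_sumr prob_sum // mulr1.
set v := fun a => \sum_b prob st b * (yhat M (prob st) (y t) a b - M) ^+ 2.
have hv := var_term st (Hy t).
have ha a : prob st a * phi (step M (y t) st a) <=
    prob st a * (phi st + ln K%:R * v a).
  case: (eqVneq (prob st a) 0) => pa; first by rewrite pa !mul0r.
  apply: ler_wpM2l; first exact: prob_ge0.
  set d := delta st.2 (prob st) (yhat M (prob st) (y t) a) a.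
  have d0 : 0 <= d by exact: delta_ge0.
  have d1 : d <= M - lo.
    apply: (le_trans (delta_leM HK (Hy t) HD pa)).
    by have := Hy t a; case/andP => h _; lra.
  have v0 : 0 <= v a.
    by apply: sumr_ge0 => b _; apply: mulr_ge0; [exact: prob_ge0 | exact: sqr_ge0].
  have d2 : 2 * st.2 * d <= ln K%:R * v a.
    case: (eqVneq st.2 0) => D0.
      by rewrite D0 mulr0 mul0r; apply: mulr_ge0 => //; exact: ltW.
    have Dp := Dpos HD D0.
    have := delta_le_var HK a (Hy t) HD D0; rewrite -/d => h.
    apply: (@le_trans _ _ (2 * st.2 * (eta_of K st.2 / 2 * v a))).
      by apply: ler_wpM2l => //; apply: mulr_ge0.
    have -> : 2 * st.2 * (eta_of K st.2 / 2 * v a) = (eta_of K st.2 * st.2) * v a by field.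
    by rewrite (etaD K Dp).
  rewrite /phi /=. rewrite -/d.
  have e : (st.2 + d - (M - lo) / 2) ^+ 2 =
    (st.2 - (M - lo) / 2) ^+ 2 + 2 * st.2 * d + d * (d - (M - lo)) by field.
  rewrite e.
  have : d * (d - (M - lo)) <= 0 by apply: mulr_ge0_le0 => //; lra.
  lra.
apply: (@le_trans _ _ (\sum_a prob st a * (phi st + ln K%:R * v a) + n%:R * C)).
  by rewrite lerD2r; apply: ler_sum => a _; exact: ha.
rewrite (eq_bigr (fun a => phi st * prob st a + ln K%:R * (prob st a * v a))); last first.
  by move=> a _; ring.
rewrite big_split /= -!mulr_sumr prob_sum // mulr1.
have : ln K%:R * \sum_a prob st a * v a <= C.
  by rewrite /C; apply: ler_wpM2l => //; exact: ltW.
rewrite -addn1 natrD mulrDl mul1r.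
lra.
Qed.

End Expect.

Lemma amgm (R : realType) (u c : R) : 0 < c -> u <= (2 * c)^-1 * u ^+ 2 + c / 2.
Proof.
move=> c0.
have -> : (2 * c)^-1 * u ^+ 2 + c / 2 = u + (u - c) ^+ 2 / (2 * c).
  by field; rewrite gt_eqF.
by rewrite lerDl divr_ge0 ?sqr_ge0 // mulr_ge0 // ltW.
Qed.

Unset Implicit Arguments.
Set Strict Implicit.

Theorem theorem8 (R : realType) (K : nat) (HK : (2 <= K)%N) (M m : R)
  (HmM : m <= M) (y : nat -> 'I_K -> R)
  (Hy : forall t a, m <= y t a <= M) (T : nat) (HT : (1 <= T)%N) :
  regret M y T <=
  2 * (M - m) * Num.sqrt (K%:R * T%:R * ln K%:R) + 2 * (M - m).
Proof.
set B := M - m.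
set sq := Num.sqrt (K%:R * T%:R * ln K%:R).
have B0 : 0 <= B by rewrite /B subr_ge0.
have lK := lnK_gt0 R HK.
have KTl : 0 <= K%:R * T%:R * ln K%:R :> R by rewrite !mulr_ge0 // ltW.
have sq0 : 0 <= sq by exact: sqrtr_ge0.
have sq2 : sq ^+ 2 = K%:R * T%:R * ln K%:R by rewrite sqr_sqrtr.
set st0 := init_state R K.
have HD0 : 0 <= st0.2 by [].
set rew := exp_reward M y T 0 st0.
set ED := Ex M y T 0 st0 (fun s => s.2).
set Y := B ^+ 2 / 4 + T%:R * (ln K%:R * (K%:R * B ^+ 2)).
have hY : Ex M y T 0 st0 (phi M m) <= Y.
  have := claimC HK Hy T 0 HD0.
  rewrite /phi /= -/B.
  have -> : (0 - B / 2) ^+ 2 = B ^+ 2 / 4 by field.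
  by [].
have hEc : forall c, 0 < c -> ED <= (2 * c)^-1 * Y + (B / 2 + c / 2).
  move=> c c0.
  apply: (@le_trans _ _ (Ex M y T 0 st0 (fun s => (2 * c)^-1 * phi M m s + (B / 2 + c / 2)))).
    apply: (Ex_le HK) => // s _.
    have := amgm (s.2 - B / 2) c0; rewrite /phi -/B; lra.
  rewrite Ex_lin (Ex_const HK) lerD2r; apply: ler_wpM2l => //.
  by rewrite invr_ge0 mulr_ge0 // ltW.
have hED : ED <= B * sq + B.
  case: (eqVneq B 0) => BE.
    rewrite BE mul0r addr0.
    have Y0 : Y = 0 by rewrite /Y BE; ring.
    case: (lerP ED 0) => // EDp.
    have := hEc ED EDp; rewrite Y0 mulr0 add0r BE mul0r add0r.
    lra.
  have Bp : 0 < B by rewrite lt_neqAle eq_sym BE.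
  set c := B * sq + B / 2.
  have c0 : 0 < c by rewrite /c ltr_pwDr ?divr_gt0 // mulr_ge0 // ltW.
  have hc2 : Y <= c ^+ 2.
    have -> : c ^+ 2 = B ^+ 2 * sq ^+ 2 + B ^+ 2 * sq + B ^+ 2 / 4 by rewrite /c; field.
    rewrite sq2 /Y.
    have : 0 <= B ^+ 2 * sq by rewrite mulr_ge0 // sqr_ge0.
    move=> h.
    have -> : T%:R * (ln K%:R * (K%:R * B ^+ 2)) = B ^+ 2 * (K%:R * T%:R * ln K%:R) by ring.
    lra.
  have h1 : (2 * c)^-1 * Y <= c / 2.
    apply: (@le_trans _ _ ((2 * c)^-1 * c ^+ 2)).
      by apply: ler_wpM2l => //; rewrite invr_ge0 mulr_ge0 // ltW.
    by rewrite le_eqVlt; apply/orP; left; apply/eqP; field; rewrite gt_eqF.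
  have := hEc c c0; rewrite /c in h1 *; lra.
have hcol : forall c, \sum_(t < T) y t c <= rew + 2 * (B * sq + B).
  move=> c.
  have hB := claimB HK Hy T 0 st0 c.
  rewrite /= add0r in hB.
  have hA := claimA HK M y T 0 HD0.
  have G0 : G HK st0 <= 0.
    by rewrite /G /Psi /= eqxx subr0; apply: maxL_le => b.
  have hG : Ex M y T 0 st0 (fun s => (-2) * s.2 + s.1 c) <= Ex M y T 0 st0 (G HK).
    apply: (Ex_le HK) => // s Hs.
    have := Psi_ge HK c Hs; rewrite /G; lra.
  rewrite Ex_lin -/ED in hG.
  have e : \sum_(t < T) y t c = \sum_(i < T) y (0 + i)%N c.
    by apply: eq_bigr => i _; rewrite add0n.
  rewrite e; rewrite -/rew in hA; lra.
rewrite /regret -/st0 -/rew /maxlist.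
set s := [seq _ | a <- enum 'I_K].
have hs : forall x, x \in s -> x <= rew + 2 * (B * sq + B).
  by move=> x /mapP [c _ ->]; exact: hcol.
have sz : size s = K by rewrite size_map size_enum_ord.
have : \big[Num.max/head 0 s]_(x <- s) x <= rew + 2 * (B * sq + B).
  case E: s hs sz => [|x s'] hs' sz'; first by rewrite -sz' in HK.
  rewrite big_seq /=; apply: bigmax_le => [|i]; first by apply: hs'; exact: mem_head.
  exact: hs'.
by rewrite /B; lra.
Qed.
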